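(* Let $q$ be a power of an odd prime, write $q-1=2^s r$ with $r$ odd, and let $c\in\mathbb{F}_q^*$. The functional graph of $f(X)=c(X^{q+1}+X^2)$ over $\mathbb{F}_{q^2}$ is isomorphic to $$\mathscr{Z}^*(q)\ \oplus\ \bigoplus_{d\mid r}\frac{q\,\varphi(d)}{\mathrm{ord}_{d}(2)}\times\big(Cyc(\mathrm{ord}_{d}(2)),\mathscr{T}(s)\big).$$
   Context: The functional graph of a map $f:\mathbb{F}_{q^2}\to\mathbb{F}_{q^2}$ is the directed graph with vertex set $\mathbb{F}_{q^2}$ and an edge $x\to f(x)$ for every $x$. $Cyc(n)$ is the directed cycle of length $n$. $\mathscr{T}(1)$ is the tree with two vertices $P_1,P$ and the edge $P_1\to P$ (root $P$); for $m\ge1$, $\mathscr{T}(m+1)$ is obtained from $\mathscr{T}(m)$ by attaching two new vertices, each with an edge directed to it, to every vertex of the last (top) level of $\mathscr{T}(m)$. $(Cyc(n),\mathscr{T}(m))$ is the graph obtained from $Cyc(n)$ by replacing each vertex of the cycle by a copy of $\mathscr{T}(m)$ whose root is that cycle vertex. $\mathscr{Z}^*(q)$ is the graph consisting of a vertex with a loop ($Cyc(1)$) to which $q-1$ copies of $\mathscr{T}(1)$ are attached, the root of each copy being identified with the fixed vertex (i.e. a fixed vertex with $q-1$ further vertices pointing to it, which have no preimages). $\oplus$ denotes disjoint union and $k\times G$ denotes $k$ disjoint copies of $G$. $\varphi$ is Euler's totient function and $\mathrm{ord}_m(n)$ is the multiplicative order of $n$ modulo $m$ (with $\mathrm{ord}_1(2)=1$).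 *)

(* Defs.v *)
From HB Require Import structures.
From mathcomp Require Import all_boot all_order all_algebra all_field.
Set Implicit Arguments. Unset Strict Implicit. Unset Printing Implicit Defensive.

Record fgraph := FGraph { fg_V : finType; fg_succ : fg_V -> fg_V }.

Definition fg_iso (G H : fgraph) : Prop :=
  exists phi : fg_V G -> fg_V H,
    bijective phi /\ forall x, phi (fg_succ x) = fg_succ (phi x).

Definition fgraph_of (T : finType) (f : T -> T) : fgraph := FGraph f.

Definition fg_sum (G H : fgraph) : fgraph :=
  @FGraph (fg_V G + fg_V H)%type
    (fun v => match v with inl x => inl (fg_succ x) | inr y => inr (fg_succ y) end).

Definition fg_bigsum (I : finType) (G : I -> fgraph) : fgraph :=
  @FGraph {i : I & fg_V (G i)}
    (fun v => Tagged (fun i => fg_V (G i)) (fg_succ (tagged v))).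

Definition fg_copies (k : nat) (G : fgraph) : fgraph :=
  fg_bigsum (fun _ : 'I_k => G).

(* Z^*(q): a fixed vertex (None) with q-1 further vertices (Some i) mapping
   to it, which have no preimages. *)
Definition Zstar (q : nat) : fgraph :=
  @FGraph (option 'I_q.-1) (fun _ => None).

Lemma half_ord_lt n (v : 'I_n) : v./2 < n.
Proof.
apply: leq_ltn_trans (ltn_ord v).
rewrite leq_half_double; apply: leq_trans (leq_addr v v) _; by rewrite addnn leqnSn.
Qed.

(* The tree T(m) encoded heap-style on {0,...,2^m - 1}: 0 is the root P,
   1 is P_1, and the two vertices attached to vertex v >= 1 are 2v and 2v+1.
   Every non-root vertex v points to v/2 (so 1 -> 0).  Level j >= 1 is
   [2^(j-1), 2^j).  The parent map on the root is irrelevant and is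
   overridden in cyc_tree below. *)
Definition tree_parent (m : nat) (v : 'I_(2 ^ m)) : 'I_(2 ^ m) :=
  Ordinal (half_ord_lt v).

(* (Cyc(n), T(m)): vertices (i, v), i the cycle position, v a vertex of the
   i-th copy of T(m); the roots (i, 0) form the cycle (i,0) -> (i+1 mod n, 0),
   other vertices point to their parent in the tree. *)
Definition cyc_tree (n m : nat) : fgraph :=
  @FGraph ('I_n * 'I_(2 ^ m))%type
    (fun p => if val p.2 == 0 then (ordS p.1, p.2) else (p.1, tree_parent p.2)).

(* Multiplicative order ord_m(a): least k >= 1 with a^k = 1 (mod m).
   (Searched within 1..m, which suffices whenever gcd(a,m) = 1, as
   ord_m(a) <= phi(m) <= m; gives ord_1(2) = 1.) *)
Definition mult_order (m a : nat) : nat :=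
  (find (fun k => a ^ k.+1 == 1 %[mod m]) (iota 0 m)).+1.

Definition divisor_idx (r : nat) := {d : 'I_r.+1 | (val d) %| r}.

(* Main.v *)
Require Import Defs.
From HB Require Import structures.
From mathcomp Require Import all_boot all_order all_algebra all_field.
From mathcomp Require Import zify ring.
From mathcomp Require cyclic.
From Stdlib Require Import ClassicalEpsilon.
Import GRing.Theory.
Import Defs.
Set Implicit Arguments. Unset Strict Implicit. Unset Printing Implicit Defensive.


Lemma iso_intro (G H : fgraph) (phi : fg_V G -> fg_V H) (psi : fg_V H -> fg_V G) :
  cancel phi psi -> cancel psi phi ->
  (forall x, phi (fg_succ x) = fg_succ (phi x)) -> fg_iso G H.
Proof. move=> K1 K2 C; exists phi; split => //; exact: Bijective K1 K2. Qed.

Lemma iso_refl G : fg_iso G G.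
Proof. exact: (@iso_intro G G id id). Qed.

Lemma iso_sym G H : fg_iso G H -> fg_iso H G.
Proof.
case=> phi [[psi K1 K2] C]; apply: (iso_intro K2 K1) => y.
by rewrite -{1}(K2 y) -C K1.
Qed.

Lemma iso_trans G H K : fg_iso G H -> fg_iso H K -> fg_iso G K.
Proof.
case=> phi [[psi K1 K2] C]; case=> phi' [[psi' K1' K2'] C'].
apply: (@iso_intro _ _ (phi' \o phi) (psi \o psi')).
- exact: can_comp.
- exact: can_comp.
by move=> x /=; rewrite C C'.
Qed.

Lemma iso_sum G G' H H' : fg_iso G G' -> fg_iso H H' ->
  fg_iso (fg_sum G H) (fg_sum G' H').
Proof.
case=> phi [[psi K1 K2] C]; case=> phi' [[psi' K1' K2'] C'].
apply: (@iso_intro (fg_sum G H) (fg_sum G' H')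
  (fun v => match v with inl x => inl (phi x) | inr y => inr (phi' y) end)
  (fun v => match v with inl x => inl (psi x) | inr y => inr (psi' y) end)).
- by case=> x /=; rewrite ?K1 ?K1'.
- by case=> x /=; rewrite ?K2 ?K2'.
by case=> x /=; rewrite ?C ?C'.
Qed.

Lemma iso_bigsum (I : finType) (G H : I -> fgraph) :
  (forall i, fg_iso (G i) (H i)) -> fg_iso (fg_bigsum G) (fg_bigsum H).
Proof.
move=> h.
pose P i (phi : fg_V (G i) -> fg_V (H i)) := exists psi : fg_V (H i) -> fg_V (G i),
   cancel phi psi /\ cancel psi phi /\ forall x, phi (fg_succ x) = fg_succ (phi x).
have e i : exists phi, P i phi.
  by case: (h i) => phi [[psi K1 K2] C]; exists phi, psi.
pose phi i := proj1_sig (constructive_indefinite_description _ (e i)).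
have e2 i := proj2_sig (constructive_indefinite_description _ (e i)).
pose psi i := proj1_sig (constructive_indefinite_description _ (e2 i)).
have e3 i : cancel (phi i) (psi i) /\ cancel (psi i) (phi i) /\
   forall x, phi i (fg_succ x) = fg_succ (phi i x).
  exact: (proj2_sig (constructive_indefinite_description _ (e2 i))).
apply: (@iso_intro (fg_bigsum G) (fg_bigsum H)
  (fun v => Tagged (fun i => fg_V (H i)) (phi (tag v) (tagged v)))
  (fun v => Tagged (fun i => fg_V (G i)) (psi (tag v) (tagged v)))).
- by case=> i x /=; case: (e3 i) => -> _.
- by case=> i x /=; case: (e3 i) => _ [-> _].
by case=> i x /=; case: (e3 i) => _ [_ ->].
Qed.


Definition fg_sub (T : finType) (f : T -> T) (P : pred T)
  (HP : forall x, P x -> P (f x)) : fgraph :=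
  @FGraph {x : T | P x} (fun x => exist (fun x => P x) (f (val x)) (HP _ (valP x))).

Lemma lab_inv (T I : finType) (f : T -> T) (lab : T -> I)
  (H : forall x, lab (f x) = lab x) (i : I) : forall x, lab x == i -> lab (f x) == i.
Proof. by move=> x; rewrite H. Qed.
Arguments lab_inv [T I f lab] H i.

Lemma Tagged_sig_eq (I : Type) (T : Type) (Q : I -> T -> bool) i j y
  (p : Q i y) (p' : Q j y) : i = j ->
  Tagged (fun k => {x | Q k x}) (exist _ y p) = Tagged (fun k => {x | Q k x}) (exist _ y p').
Proof. by move=> E; subst j; rewrite (bool_irrelevance p p'). Qed.

Lemma iso_label (T I : finType) (f : T -> T) (lab : T -> I)
  (H : forall x, lab (f x) = lab x) :
  fg_iso (fgraph_of f) (fg_bigsum (fun i => fg_sub (lab_inv H i))).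
Proof.
apply: (@iso_intro (fgraph_of f) (fg_bigsum (fun i => fg_sub (lab_inv H i)))
  (fun x => Tagged (fun i => {x | lab x == i}) (exist (fun y => lab y == lab x) x (eqxx _)))
  (fun v => val (tagged v))).
- by [].
- case=> i [y hy] /=.
  by apply: (@Tagged_sig_eq I T (fun k x => lab x == k)); apply/eqP.
move=> x /=.
by apply: (@Tagged_sig_eq I T (fun k x => lab x == k)); rewrite H.
Qed.

Lemma iso_bigsum_bool (G : bool -> fgraph) :
  fg_iso (fg_bigsum G) (fg_sum (G true) (G false)).
Proof.
apply: (@iso_intro (fg_bigsum G) (fg_sum (G true) (G false))
  (fun v => match v with existT true x => inl x | existT false x => inr x end)
  (fun v => match v with inl x => Tagged (fun b => fg_V (G b)) x
                    | inr x => Tagged (fun b => fg_V (G b)) x end)).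
- by case=> [[] x].
- by case.
by case=> [[] x].
Qed.

Lemma iso_reindex (I J : finType) (G : fgraph) (e : I -> J) (e' : J -> I) :
  cancel e e' -> cancel e' e ->
  fg_iso (fg_bigsum (fun _ : I => G)) (fg_bigsum (fun _ : J => G)).
Proof.
move=> K1 K2.
apply: (@iso_intro (fg_bigsum (fun _ : I => G)) (fg_bigsum (fun _ : J => G))
  (fun v => existT (fun _ => fg_V G) (e (tag v)) (tagged v))
  (fun v => existT (fun _ => fg_V G) (e' (tag v)) (tagged v))).
- by case=> i x /=; rewrite K1.
- by case=> i x /=; rewrite K2.
by case.
Qed.

Lemma iso_copies_card (I : finType) (G : fgraph) n : #|I| = n ->
  fg_iso (fg_bigsum (fun _ : I => G)) (fg_copies n G).
Proof.
move=> <-; exact: (iso_reindex G (@enum_rankK I) (@enum_valK I)).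
Qed.

Lemma iso_copies_copies n m G :
  fg_iso (fg_copies n (fg_copies m G)) (fg_copies (n * m) G).
Proof.
apply: (@iso_trans _ (fg_bigsum (fun _ : ('I_n * 'I_m)%type => G))); last first.
  by apply: iso_copies_card; rewrite card_prod !card_ord.
apply: (@iso_intro (fg_copies n (fg_copies m G)) (fg_bigsum (fun _ : ('I_n * 'I_m)%type => G))
  (fun v => existT (fun _ => fg_V G) (tag v, tag (tagged v)) (tagged (tagged v)))
  (fun v => existT (fun _ => fg_V (fg_copies m G)) (tag v).1
               (existT (fun _ => fg_V G) (tag v).2 (tagged v)))).
- by case=> i [j x].
- by case=> [[i j] x].
by case=> i [j x].
Qed.

Lemma iso_copies_bigsum n (I : finType) (H : I -> fgraph) :
  fg_iso (fg_copies n (fg_bigsum H)) (fg_bigsum (fun i => fg_copies n (H i))).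
Proof.
apply: (@iso_intro (fg_copies n (fg_bigsum H)) (fg_bigsum (fun i => fg_copies n (H i)))
  (fun v => existT (fun i => fg_V (fg_copies n (H i))) (tag (tagged v))
       (existT (fun _ => fg_V (H (tag (tagged v)))) (tag v) (tagged (tagged v))))
  (fun v => existT (fun _ => fg_V (fg_bigsum H)) (tag (tagged v))
       (existT (fun i => fg_V (H i)) (tag v) (tagged (tagged v))))).
- by case=> k [i x].
- by case=> i [k x].
by case=> k [i x].
Qed.

Definition fg_prod (G H : fgraph) : fgraph :=
  @FGraph (fg_V G * fg_V H)%type (fun p => (fg_succ p.1, fg_succ p.2)).

Lemma iso_prod G G' H H' : fg_iso G G' -> fg_iso H H' ->
  fg_iso (fg_prod G H) (fg_prod G' H').
Proof.
case=> phi [[psi K1 K2] C]; case=> phi' [[psi' K1' K2'] C'].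
apply: (@iso_intro (fg_prod G H) (fg_prod G' H')
  (fun v => (phi v.1, phi' v.2)) (fun v => (psi v.1, psi' v.2))).
- by case=> x y /=; rewrite K1 K1'.
- by case=> x y /=; rewrite K2 K2'.
by case=> x y /=; rewrite C C'.
Qed.

Lemma iso_prod_bigsum (I : finType) (G : I -> fgraph) H :
  fg_iso (fg_prod (fg_bigsum G) H) (fg_bigsum (fun i => fg_prod (G i) H)).
Proof.
apply: (@iso_intro (fg_prod (fg_bigsum G) H) (fg_bigsum (fun i => fg_prod (G i) H))
  (fun v => existT (fun i => fg_V (fg_prod (G i) H)) (tag v.1) (tagged v.1, v.2))
  (fun v => (existT (fun i => fg_V (G i)) (tag v) (tagged v).1, (tagged v).2))).
- by case=> [[i x] h].
- by case=> i [x h].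
by case=> [[i x] h].
Qed.


Definition Cyc (L : nat) : fgraph := @FGraph 'I_L (@ordS L).

Lemma existT_const_eq (A B : Type) (a a' : A) (b b' : B) : a = a' -> b = b' ->
  existT (fun _ => B) a b = existT (fun _ => B) a' b'.
Proof. by move=> -> ->. Qed.

Lemma order_eq (X : finType) (f : X -> X) (x : X) L : injective f -> 0 < L ->
  iter L f x = x -> (forall m, 0 < m < L -> iter m f x != x) -> order f x = L.
Proof.
move=> injf L0 itL minL.
have o0 := order_gt0 f x.
have io := iter_order injf x.
apply/eqP; rewrite eqn_leq; apply/andP; split.
  rewrite leqNgt; apply/negP => lt.
  have := findex_iter lt; rewrite itL findex0 => E.
  by move: L0; rewrite -E.
rewrite leqNgt; apply/negP => lt.
by move: (minL (order f x)); rewrite o0 lt io eqxx => /(_ isT).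
Qed.

Lemma sumn_map_const (T : Type) (s : seq T) c : sumn (map (fun _ => c) s) = size s * c.
Proof. by elim: s => //= a s ->; rewrite mulSn. Qed.

Lemma iso_card G H : fg_iso G H -> #|fg_V G| = #|fg_V H|.
Proof. by case=> phi [bij _]; apply: bij_eq_card bij. Qed.

Section Perm.
Variables (X : finType) (f : X -> X) (L : nat).
Hypothesis injf : injective f.
Hypothesis ordL : forall x, order f x = L.

Let symf : connect_sym (frel f) := fconnect_sym injf.

Local Notation Rt := {x : X | froots f x}.

Definition rootx (x : X) : Rt := exist _ (froot f x) (roots_root symf x).

Lemma fcon_root x : fconnect f (froot f x) x.
Proof. by rewrite symf; apply: connect_root. Qed.

Lemma findex_root_lt x : findex f (froot f x) x < L.
Proof. by rewrite -(ordL (froot f x)); apply: findex_max; apply: fcon_root. Qed.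

Lemma iso_perm : fg_iso (fgraph_of f) (fg_bigsum (fun _ : Rt => Cyc L)).
Proof.
apply: (@iso_intro (fgraph_of f) (fg_bigsum (fun _ : Rt => Cyc L))
  (fun x => existT (fun _ => 'I_L) (rootx x) (Ordinal (findex_root_lt x)))
  (fun v => iter (tagged v) f (val (tag v)))).
- by move=> x /=; apply: iter_findex; apply: fcon_root.
- case=> [[r hr] k] /=.
  have hr' : froot f r = r by apply/eqP.
  have E : froot f (iter k f r) = r.
    rewrite -[RHS]hr'; symmetry; move: (fconnect_iter f k r) => /(fingraph.rootP symf); exact.
  apply: existT_const_eq; first by apply: val_inj.
  apply: val_inj => /=; rewrite E findex_iter //.
  by rewrite ordL.
move=> x /=.
have E : froot f (f x) = froot f x.
  symmetry; apply/(fingraph.rootP symf); apply: connect1; by rewrite /= eqxx.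
apply: existT_const_eq; first by apply: val_inj.
apply: val_inj => /=.
rewrite E.
set r := froot f x.
have -> : f x = iter (findex f r x).+1 f r.
  by rewrite iterS iter_findex //; apply: fcon_root.
have := findex_root_lt x; rewrite -/r => lt.
rewrite leq_eqVlt in lt; case/orP: lt => [/eqP E2 | lt].
  rewrite E2 -{1}(ordL r) iter_order // findex0.
  by rewrite modnn.
by rewrite findex_iter ?ordL // modn_small.
Qed.

Lemma card_perm : #|X| = #|{: Rt}| * L.
Proof.
have := iso_card iso_perm; rewrite /= => ->.
by rewrite card_tagged sumn_map_const card_ord -cardE.
Qed.

End Perm.


Definition Tree (s : nat) : fgraph := @FGraph 'I_(2 ^ s) (@tree_parent s).

Fixpoint dep (n v : nat) : nat :=
  if n is n'.+1 then (if v is 0 then 0 else (dep n' v./2).+1) else 0.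

Lemma half_le v : v.+1./2 <= v.
Proof. rewrite -divn2; lia. Qed.

Lemma dep_fuel n m v : v <= n -> v <= m -> dep n v = dep m v.
Proof.
elim: n m v => [|n IH] [|m] [|v] //= hn hm.
by congr S; apply: IH; apply: leq_trans (half_le v) _.
Qed.

Definition depth v := dep v v.

Lemma depth_half v : 0 < v -> depth v = (depth v./2).+1.
Proof.
case: v => // v _; rewrite /depth /=; congr S; apply: dep_fuel => //.
exact: half_le.
Qed.

Lemma depth0 : depth 0 = 0. Proof. by []. Qed.

Lemma unroll L s : fg_iso (fg_prod (Cyc L) (Tree s)) (cyc_tree L s).
Proof.
apply: (@iso_intro (fg_prod (Cyc L) (Tree s)) (cyc_tree L s)
  (fun p => (iter (depth p.2) (@ordS L) p.1, p.2))
  (fun p => (iter (depth p.2) (@ord_pred L) p.1, p.2))).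
- case=> i v /=; congr pair.
  by elim: (depth v) i => // n IH i; rewrite iterSr iterS ordSK IH.
- case=> i v /=; congr pair.
  by elim: (depth v) i => // n IH i; rewrite iterSr iterS ord_predK IH.
case=> i v /=.
have [v0|vpos] := eqVneq (val v) 0.
  have tv : tree_parent v = v by apply: val_inj; rewrite /= v0.
  by rewrite tv v0 depth0.
rewrite (@depth_half (val v)) ?lt0n //.
by rewrite iterSr.
Qed.


Lemma ord_pos N (e : 'I_N) : 0 < N.
Proof. exact: leq_ltn_trans (leq0n e) (ltn_ord e). Qed.

Definition dblo N (e : 'I_N) : 'I_N := Ordinal (ltn_pmod (2 * e) (ord_pos e)).

Definition DblG N : fgraph := @FGraph 'I_N (@dblo N).

Lemma modn_dbl e m : 0 < m -> e %% (2 * m) = odd e + (e./2 %% m).*2.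
Proof.
move=> m0.
have E : e = (e./2 %/ m) * (2 * m) + (odd e + (e./2 %% m).*2).
  by rewrite -{1}(odd_double_half e) {1}(divn_eq e./2 m) -!muln2; lia.
rewrite {1}E modnMDl modn_small //.
by have := ltn_pmod e./2 m0; case: (odd e) => /=; rewrite -!muln2; lia.
Qed.

Fixpoint bits s e : seq bool := if s is s'.+1 then odd e :: bits s' e./2 else [::].
Fixpoint num (l : seq bool) : nat := if l is b :: l' then b + (num l').*2 else 0.
Definition brev s e := num (rev (bits s e)).

Lemma size_bits s e : size (bits s e) = s.
Proof. by elim: s e => //= s IH e; rewrite IH. Qed.

Lemma num_lt l : num l < 2 ^ size l.
Proof.
elim: l => //= b l IH; rewrite expnS.
by case: b => /=; rewrite -muln2; lia.
Qed.

Lemma bits_num l : bits (size l) (num l) = l.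
Proof.
elim: l => //= b l IH.
rewrite oddD odd_double addbF half_bit_double IH.
by case: b.
Qed.

Lemma num_bits s e : num (bits s e) = e %% 2 ^ s.
Proof.
elim: s e => [|s IH] e /=; first by rewrite modn1.
by rewrite IH expnS modn_dbl ?expn_gt0.
Qed.

Lemma bits_dbl s e : bits s.+1 (2 * e) = false :: bits s e.
Proof.
by rewrite /= mul2n odd_double doubleK.
Qed.

Lemma bits_take s e : bits s e = take s (bits s.+1 e).
Proof.
by elim: s e => //= s IH e; rewrite -IH.
Qed.

Lemma bits_mod s e : bits s (e %% 2 ^ s) = bits s e.
Proof.
by rewrite -num_bits -{1}(size_bits s e) bits_num.
Qed.

Lemma num_rcons0 l : num (rcons l false) = num l.
Proof. by elim: l => //= b l ->. Qed.

Lemma brev_dbl s e : brev s ((2 * e) %% 2 ^ s) = (brev s e)./2.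
Proof.
rewrite /brev bits_mod bits_take bits_dbl.
have := size_bits s e.
case/lastP: (bits s e) => [|x b] /=.
  by move=> <-.
rewrite size_rcons => <-.
rewrite /= -cats1 take_size_cat // rev_cons num_rcons0 rev_cat /=.
by rewrite half_bit_double.
Qed.

Lemma brev_lt s e : brev s e < 2 ^ s.
Proof. by have := num_lt (rev (bits s e)); rewrite size_rev size_bits. Qed.

Lemma brevK s e : e < 2 ^ s -> brev s (brev s e) = e.
Proof.
move=> lt; rewrite /brev.
have := bits_num (rev (bits s e)); rewrite size_rev size_bits => ->.
by rewrite revK num_bits modn_small.
Qed.

Definition brevo s (e : 'I_(2 ^ s)) : 'I_(2 ^ s) := Ordinal (brev_lt s e).

Lemma iso_dbl_tree s : fg_iso (DblG (2 ^ s)) (Tree s).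
Proof.
apply: (@iso_intro (DblG (2 ^ s)) (Tree s) (@brevo s) (@brevo s)).
- by move=> e; apply: val_inj; rewrite /= brevK.
- by move=> e; apply: val_inj; rewrite /= brevK.
by move=> e; apply: val_inj; rewrite /= brev_dbl.
Qed.


Lemma gcd_split e r : 0 < r ->
  [/\ 0 < gcdn e r, e = gcdn e r * (e %/ gcdn e r), r = gcdn e r * (r %/ gcdn e r)
    & coprime (e %/ gcdn e r) (r %/ gcdn e r)].
Proof.
move=> r0; have g0 : 0 < gcdn e r by rewrite gcdn_gt0 r0 orbT.
have Ee : e = gcdn e r * (e %/ gcdn e r) by rewrite mulnC divnK ?dvdn_gcdl.
have Er : r = gcdn e r * (r %/ gcdn e r) by rewrite mulnC divnK ?dvdn_gcdr.
split => //.
rewrite /coprime; apply/eqP.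
have : gcdn e r = gcdn e r * gcdn (e %/ gcdn e r) (r %/ gcdn e r).
  by rewrite muln_gcdr -Ee -Er.
by rewrite -{1}[gcdn e r]muln1 => /eqP; rewrite eqn_pmul2l // => /eqP <-.
Qed.

Lemma dvd_gcd_key r e k : 0 < r -> (r %| k * e) = (r %/ gcdn e r %| k).
Proof.
move=> r0; have [g0 Ee Er cop] := gcd_split e r0.
have -> : (r %| k * e) = (gcdn e r * (r %/ gcdn e r) %| gcdn e r * (k * (e %/ gcdn e r))).
  by rewrite -Er mulnCA -Ee.
rewrite dvdn_pmul2l //.
by rewrite Gauss_dvdl // coprime_sym.
Qed.

Lemma totient_le d : totient d <= d.
Proof.
rewrite totient_count_coprime big_mkord.
apply: (@leq_trans (\sum_(k < d) 1)); first by apply: leq_sum => k _; exact: leq_b1.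
by rewrite sum_nat_const card_ord muln1.
Qed.

Lemma pow_mod1 d k : (2 ^ k == 1 %[mod d]) = (d %| 2 ^ k - 1).
Proof. by rewrite eqn_mod_dvd // expn_gt0. Qed.

Section MO.
Variable d : nat.
Hypotheses (d_odd : odd d) (d0 : 0 < d).

Let P := (fun k => 2 ^ k.+1 == 1 %[mod d]).

Lemma mo_has : has P (iota 0 d).
Proof.
apply/hasP; exists (totient d).-1.
  rewrite mem_iota /= add0n; have := totient_le d; have := totient_gt0 d.
  by rewrite d0; case: (totient d) => //= t _ /ltP /leP.
rewrite /P prednK ?totient_gt0 //.
by apply/eqP; apply: cyclic.Euler_exp_totient; rewrite coprime2n.
Qed.

Lemma mo_dvd : d %| 2 ^ mult_order d 2 - 1.
Proof.
rewrite -pow_mod1; have := nth_find 0 mo_has.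
have hf : find P (iota 0 d) < d by have := mo_has; rewrite has_find size_iota.
by rewrite /P nth_iota // add0n.
Qed.

Lemma mo_min m : 0 < m < mult_order d 2 -> ~~ (d %| 2 ^ m - 1).
Proof.
case: m => // m /andP [_ lt]; rewrite -pow_mod1.
have lt' : m < find P (iota 0 d) by [].
have := before_find 0 lt'.
have ltd : m < d.
  apply: ltn_trans lt' _; by have := mo_has; rewrite has_find size_iota.
by rewrite /P nth_iota // add0n => ->.
Qed.

End MO.


Lemma iter_sub (T : finType) (f : T -> T) (P : pred T) (HP : forall x, P x -> P (f x))
  (x : {x | P x}) m :
  val (iter m (@fg_succ (fg_sub HP)) x) = iter m f (val x).
Proof. by elim: m => //= m ->. Qed.

Lemma iter_dblo r (e : 'I_r) m : nat_of_ord (iter m (@dblo r) e) = (2 ^ m * e) %% r.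
Proof.
elim: m => /= [|m IH]; first by rewrite mul1n modn_small.
by rewrite IH modnMmr expnS mulnA.
Qed.

Section Odd.
Variable r : nat.
Hypothesis r_odd : odd r.

Lemma r_pos : 0 < r. Proof. exact: odd_gt0. Qed.

Definition labd (e : 'I_r) : divisor_idx r :=
  exist (fun d : 'I_r.+1 => val d %| r)
    (Ordinal (leq_div r (gcdn e r) : r %/ gcdn e r < r.+1)) (dvdn_div (dvdn_gcdr e r)).

Lemma labd_dbl e : labd (dblo e) = labd e.
Proof.
do 2 apply: val_inj => /=.
by rewrite gcdn_modl gcdnC Gauss_gcdr ?coprimen2 // gcdnC.
Qed.

Lemma labdE e (d : divisor_idx r) : (labd e == d) = (r %/ gcdn e r == val (val d)).
Proof.
apply/eqP/eqP => [<- // | E]; by do 2 apply: val_inj.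
Qed.

Definition halfo (e : 'I_r) : 'I_r := Ordinal (ltn_pmod (((r.+1)./2) * e) r_pos).

Lemma dbloK : cancel (@dblo r) halfo.
Proof.
move=> e; apply: val_inj => /=.
rewrite modnMmr mulnA.
have -> : (r.+1)./2 * 2 = r.+1.
  by rewrite muln2 -{2}(odd_double_half r.+1) /= r_odd.
by rewrite mulSn addnC mulnC modnMDl modn_small.
Qed.

Section PerD.
Variable d : divisor_idx r.
Let dd := val (val d).
Let Xd := fg_sub (lab_inv labd_dbl d).
Let sig_d := @fg_succ Xd.

Lemma dd_odd : odd dd.
Proof.
have := valP d; rewrite -/dd => /dvdnP [k Ek].
by move: r_odd; rewrite Ek oddM => /andP [].
Qed.

Lemma dd_pos : 0 < dd.
Proof. exact: odd_gt0 dd_odd. Qed.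

Lemma sig_inj : injective sig_d.
Proof.
move=> x y E; apply: val_inj; apply: (can_inj dbloK).
by have := f_equal val E.
Qed.

Lemma iter_sig_eq (x : fg_V Xd) m : (iter m sig_d x == x) = (dd %| 2 ^ m - 1).
Proof.
rewrite -val_eqE iter_sub -[_ == _]val_eqE /= iter_dblo.
have hx := valP x; rewrite /= labdE in hx.
rewrite -{2}(modn_small (ltn_ord (val x))).
rewrite eqn_mod_dvd; last by rewrite leq_pmull // expn_gt0.
rewrite -{2}(mul1n (val x)) -mulnBl dvd_gcd_key ?r_pos //.
by rewrite (eqP hx).
Qed.

Lemma order_sig (x : fg_V Xd) : order sig_d x = mult_order dd 2.
Proof.
apply: order_eq => //; first exact: sig_inj.
  by apply/eqP; rewrite iter_sig_eq; apply: mo_dvd; [apply: dd_odd | apply: dd_pos].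
move=> m hm; rewrite iter_sig_eq; apply: mo_min => //; [apply: dd_odd | apply: dd_pos].
Qed.

End PerD.

Lemma card_coprime dd : #|[set k : 'I_dd | coprime k dd]| = totient dd.
Proof.
rewrite totient_count_coprime big_mkord -sum1_card big_mkcond /=.
by apply: eq_bigr => k _; rewrite inE coprime_sym; case: coprime.
Qed.

Lemma card_lab dd : dd %| r -> #|[pred e : 'I_r | r %/ gcdn e r == dd]| = totient dd.
Proof.
move=> ddr; have dd0 : 0 < dd := dvdn_gt0 r_pos ddr.
have Er : r = r %/ dd * dd by rewrite divnK.
have g0 : 0 < r %/ dd by rewrite divn_gt0 // dvdn_leq // r_pos.
have hlt (k : 'I_dd) : r %/ dd * k < r.
  by rewrite {2}Er ltn_pmul2l.
pose h (k : 'I_dd) : 'I_r := Ordinal (hlt k).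
have hinj : injective h.
  move=> k k' E; apply: val_inj; apply/eqP; rewrite -(eqn_pmul2l g0); apply/eqP.
  exact: (f_equal val E).
rewrite -card_coprime -(card_imset _ hinj); apply: eq_card => e.
rewrite inE /=; apply/eqP/imsetP.
  move=> E; have [gp Ee Er' cop] := gcd_split e r_pos.
  have Eg : gcdn e r = r %/ dd.
    apply/eqP; rewrite -(eqn_pmul2r dd0) -Er -E -Er' //.
  rewrite E in Er' cop; rewrite Eg in Ee Er' cop.
  have klt : e %/ (r %/ dd) < dd.
    by rewrite -(ltn_pmul2l g0) -Ee -Er.
  exists (Ordinal klt); first by rewrite inE.
  by apply: val_inj => /=; rewrite -Ee.
case=> k; rewrite inE => cop ->; rewrite /=.
have -> : gcdn (r %/ dd * k) r = r %/ dd.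
  by rewrite {2}Er -muln_gcdr (eqP cop) muln1.
by rewrite {1}Er mulKn.
Qed.

Lemma iso_odd : exists n : divisor_idx r -> nat,
  (forall d, n d * mult_order (val (val d)) 2 = totient (val (val d))) /\
  fg_iso (DblG r) (fg_bigsum (fun d => fg_copies (n d) (Cyc (mult_order (val (val d)) 2)))).
Proof.
exists (fun d => #|{: {x : {e : 'I_r | labd e == d} |
          froots (@fg_succ (fg_sub (lab_inv labd_dbl d))) x}}|).
split.
  move=> d; rewrite -(card_perm (@sig_inj d) (@order_sig d)) card_sig.
  rewrite -card_lab ?(valP d) //; apply: eq_card => e; by rewrite !inE labdE.
apply: iso_trans (iso_label labd_dbl) _; apply: iso_bigsum => d.
apply: iso_trans (iso_perm (@sig_inj d) (@order_sig d)) _.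
exact: iso_copies_card.
Qed.

End Odd.


Lemma card_bij (T1 T2 : finType) : #|T1| = #|T2| ->
  exists b : T1 -> T2, exists b' : T2 -> T1, cancel b b' /\ cancel b' b.
Proof.
move=> E.
exists (fun x => enum_val (cast_ord E (enum_rank x))).
exists (fun y => enum_val (cast_ord (esym E) (enum_rank y))).
split => x; rewrite ?enum_valK.
  by rewrite (_ : cast_ord _ _ = enum_rank x) ?enum_rankK //; apply: val_inj.
by rewrite (_ : cast_ord _ _ = enum_rank x) ?enum_rankK //; apply: val_inj.
Qed.

Definition swapo (T : eqType) (a b x : T) := if x == a then b else if x == b then a else x.

Lemma swapoK (T : eqType) (a b : T) : involutive (swapo a b).
Proof.
move=> x; rewrite /swapo.
case: (eqVneq x a) => [->|xa]; first by rewrite eqxx; case: (eqVneq b a) => [->|]; rewrite ?eqxx.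
case: (eqVneq x b) => [->|xb]; first by rewrite eqxx.
by rewrite (negbTE xa) (negbTE xb).
Qed.

Lemma iso_const_Zstar (G : fgraph) (z : fg_V G) n :
  #|fg_V G| = n.+1 -> (forall x, fg_succ x = z) -> fg_iso G (Zstar n.+1).
Proof.
move=> cG hz.
have E : #|fg_V G| = #|{: option 'I_n}| by rewrite card_option card_ord.
have [b [b' [K1 K2]]] := card_bij E.
apply: (@iso_intro G (Zstar n.+1) (fun x => swapo (b z) None (b x)) (fun y => b' (swapo (b z) None y))).
- by move=> x; rewrite swapoK K1.
- by move=> y; rewrite K2 swapoK.
by move=> x; rewrite hz /swapo eqxx.
Qed.


Lemma sq_bound q a b : (a <= q -> b <= q -> q * q <= a * b -> a = q /\ b = q)%N.
Proof.
move=> ha hb h.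
have hab : (a * b <= a * q)%N by rewrite leq_mul2l hb orbT.
have hab2 : (a * q <= q * q)%N by rewrite leq_mul2r ha orbT.
have hab3 : (a * b <= b * q)%N by rewrite mulnC leq_mul2l ha orbT.
have hab4 : (b * q <= q * q)%N by rewrite leq_mul2r hb orbT.
nia.
Qed.

Lemma mod_cancel k m a a' : coprime k m -> (a < m)%N -> (a' < m)%N ->
  (k * a == k * a' %[mod m])%N -> a = a'.
Proof.
move=> cop; wlog le: a a' / (a' <= a)%N.
  move=> W ha ha' E; case/orP: (leq_total a' a) => h; first exact: W.
  by symmetry; apply: W => //; rewrite eq_sym.
move=> ha ha'; rewrite eqn_mod_dvd; last by rewrite leq_mul2l le orbT.
rewrite -mulnBr Gauss_dvdr; last by rewrite coprime_sym.
move=> dv; have lt : (a - a' < m)%N by lia.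
case: (posnP (a - a')) => [h0|hp]; first by lia.
by have := dvdn_leq hp dv; lia.
Qed.

Lemma crt_inj m n a b a' b' : coprime m n -> (a < n)%N -> (a' < n)%N -> (b < m)%N -> (b' < m)%N ->
  (m * a + n * b == m * a' + n * b' %[mod m * n])%N -> a = a' /\ b = b'.
Proof.
move=> cop ha ha' hb hb' /eqP H.
have Hm : (n * b == n * b' %[mod m])%N.
  have E : ((m * a + n * b) %% m = (m * a' + n * b') %% m)%N.
    rewrite -(modn_dvdm (m * a + n * b) (dvdn_mulr n (dvdnn m))) H.
    by rewrite modn_dvdm // dvdn_mulr.
  by move: E; rewrite ![m * _]mulnC !modnMDl => ->.
have Hn : (m * a == m * a' %[mod n])%N.
  have E : ((m * a + n * b) %% n = (m * a' + n * b') %% n)%N.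
    rewrite -(modn_dvdm (m * a + n * b) (dvdn_mull m (dvdnn n))) H.
    by rewrite modn_dvdm // dvdn_mull.
  by move: E; rewrite ![_ + n * _]addnC ![n * _]mulnC !modnMDl => ->.
split; first exact: (mod_cancel cop).
by apply: (mod_cancel _ hb hb' Hm); rewrite coprime_sym.
Qed.

Section Field.
Local Open Scope ring_scope.
Variables (p k : nat) (F : finFieldType) (q s r : nat) (c : F).
Hypotheses (pp : prime p) (podd : odd p) (k0 : (0 < k)%N) (qE : q = (p ^ k)%N)
  (cardF : #|F| = (q ^ 2)%N) (r_odd : odd r) (qr : q.-1 = (2 ^ s * r)%N)
  (c0 : c != 0) (cq : c ^+ q = c).


Lemma q_gt1 : (1 < q)%N.
Proof.
have := prime_gt1 pp; rewrite qE; case: k k0 => // k' _ hp.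
have := expn_gt0 p k'; rewrite expnS; nia.
Qed.

Lemma q_pos : (0 < q)%N. Proof. exact: ltnW q_gt1. Qed.

Lemma charF : p \in [pchar F].
Proof. by apply: (@card_finPcharP _ _ (k * 2)) => //; rewrite cardF qE expnM. Qed.

Lemma frobD (x y : F) : (x + y) ^+ q = x ^+ q + y ^+ q.
Proof. by apply: exprDn_pchar; rewrite qE pnatX (pnatE _ pp) charF. Qed.

Lemma frobN (x : F) : (- x) ^+ q = - x ^+ q.
Proof.
apply/eqP; rewrite -addr_eq0 -frobD addNr expr0n.
by rewrite eqn0Ngt q_pos.
Qed.

Lemma frobK (x : F) : (x ^+ q) ^+ q = x.
Proof. by rewrite -exprM mulnn -cardF expf_card. Qed.

Definition Tr (x : F) := x ^+ q + x.

Lemma TrD x y : Tr (x + y) = Tr x + Tr y.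
Proof. by rewrite /Tr frobD addrACA. Qed.

Lemma TrN x : Tr (- x) = - Tr x.
Proof. by rewrite /Tr frobN opprD. Qed.

Lemma TrB x y : Tr (x - y) = Tr x - Tr y.
Proof. by rewrite TrD TrN. Qed.

Lemma TrFq x : (Tr x) ^+ q = Tr x.
Proof. by rewrite /Tr frobD frobK addrC. Qed.

Lemma TrM a x : a ^+ q = a -> Tr (a * x) = a * Tr x.
Proof. by move=> ha; rewrite /Tr exprMn ha mulrDr. Qed.

Lemma Tr0 : Tr 0 = 0.
Proof. by rewrite /Tr expr0n eqn0Ngt q_pos addr0. Qed.

Lemma card_roots (P : {poly F}) (A : pred F) : P != 0 ->
  (forall x, A x -> root P x) -> (#|A| < size P)%N.
Proof.
move=> P0 hA; rewrite cardE; apply: max_poly_roots => //; last exact: enum_uniq.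
by apply/allP => x; rewrite mem_enum; apply: hA.
Qed.

Lemma size_XqX (b : F) : size ('X^q + b *: 'X : {poly F}) = q.+1.
Proof.
rewrite size_addl size_polyXn //.
apply: leq_ltn_trans (size_scale_leq _ _) _.
by rewrite size_polyX ltnS q_gt1.
Qed.

Lemma card_ker : (#|[pred x | Tr x == 0%R]| <= q)%N.
Proof.
rewrite -ltnS -(size_XqX 1); apply: card_roots.
  by rewrite -size_poly_eq0 size_XqX.
move=> x /eqP hx; apply/rootP.
by rewrite hornerD hornerZ hornerXn hornerX mul1r.
Qed.

Lemma card_Fq : (#|[pred x : F | x ^+ q == x]| <= q)%N.
Proof.
rewrite -ltnS -(size_XqX (-1)); apply: card_roots.
  by rewrite -size_poly_eq0 size_XqX.
move=> x /eqP hx; apply/rootP.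
by rewrite hornerD hornerZ hornerXn hornerX hx mulN1r subrr.
Qed.

Lemma count_main : #|[pred x | Tr x == 0%R]| = q /\ #|[pred x : F | x ^+ q == x]| = q /\
  exists y0, Tr y0 = 1.
Proof.
pose sg y := odflt 0 [pick z | Tr z == y].
have sgP x : Tr (sg (Tr x)) = Tr x.
  by rewrite /sg; case: pickP => [z /eqP //| /(_ x)]; rewrite eqxx.
pose Phi x := (Tr x, x - sg (Tr x)).
have Phi_inj : injective Phi.
  move=> x y [E1 E2]; rewrite E1 in E2; exact: (addIr _ E2).
have sub : Phi @: setT \subset setX (Tr @: setT) [set x | Tr x == 0].
  apply/subsetP => _ /imsetP [x _ ->]; rewrite in_setX /=; apply/andP; split.
    by apply: imset_f; rewrite in_setT.
  by rewrite inE TrB sgP subrr.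
have c1 := subset_leq_card sub; rewrite cardsX card_imset // cardsT in c1.
have imFq : Tr @: setT \subset [set x | x ^+ q == x].
  by apply/subsetP => _ /imsetP [x _ ->]; rewrite inE TrFq.
have c2 := subset_leq_card imFq.
have e3 : #|[set x | Tr x == 0]| = #|[pred x | Tr x == 0%R]| by apply: eq_card => x; rewrite inE.
have e4 : #|[set x : F | x ^+ q == x]| = #|[pred x : F | x ^+ q == x]| by apply: eq_card => x; rewrite inE.
have c3 := card_ker; have c4 := card_Fq.
rewrite -e3 in c3 *; rewrite -e4 in c4 *.
have [h1 [h2 h3]] : (#|Tr @: setT| = q /\ #|[set x | Tr x == 0%R]| = q /\
    #|[set x : F | x ^+ q == x]| = q)%N.
  rewrite cardF -mulnn in c1.
  have [ha hb] := sq_bound (leq_trans c2 c4) c3 c1.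
  by split => //; split => //; apply/eqP; rewrite eqn_leq c4 /= -{1}ha c2.
split => //; split => //.
have : (1 : F) \in Tr @: setT.
  have /subset_cardP : #|Tr @: setT| = #|[set x : F | x ^+ q == x]| by rewrite h1 h3.
  move=> /(_ imFq) E; rewrite E inE expr1n //.
by case/imsetP => y0 _ E; exists y0.
Qed.
Definition fF (x : F) := c * (x ^+ q.+1 + x ^+ 2).

Lemma fFE x : fF x = (c * Tr x) * x.
Proof. by rewrite /fF /Tr exprS expr2; ring. Qed.

Lemma FqM (a b : F) : a ^+ q = a -> b ^+ q = b -> (a * b) ^+ q = a * b.
Proof. by move=> ha hb; rewrite exprMn ha hb. Qed.

Lemma FqV (a : F) : a ^+ q = a -> (a^-1) ^+ q = a^-1.
Proof. by move=> ha; rewrite exprVn ha. Qed.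

Lemma cTrFq x : (c * Tr x) ^+ q = c * Tr x.
Proof. by apply: FqM => //; apply: TrFq. Qed.

Lemma TrfF x : Tr (fF x) = (c * Tr x) * Tr x.
Proof. by rewrite fFE TrM // cTrFq. Qed.

Lemma labF x : (Tr (fF x) == 0) = (Tr x == 0).
Proof.
by rewrite TrfF !mulf_eq0 (negbTE c0) /=; case: (Tr x == 0).
Qed.

Definition labT (i : bool) := @lab_inv F bool fF (fun x => Tr x == 0) labF i.
Arguments labT i : clear implicits.

Lemma iso_const_Zstar' (G : fgraph) (z : fg_V G) n : (0 < n)%N ->
  #|fg_V G| = n -> (forall x, fg_succ x = z) -> fg_iso G (Zstar n).
Proof. by case: n => // n _; apply: iso_const_Zstar. Qed.

Lemma Tr0P : (Tr 0 == 0) == true. Proof. by rewrite Tr0 eqxx. Qed.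

Lemma iso_G1 : fg_iso (fg_sub (labT true)) (Zstar q).
Proof.
apply: (@iso_const_Zstar' (fg_sub (labT true)) (exist _ 0 Tr0P)); first exact: q_pos.
  rewrite /= card_sig; have [<- _] := count_main.
  by apply: eq_card => x; rewrite !inE; case: (Tr x == 0).
case=> x hx; apply: val_inj => /=.
by move: hx; rewrite eqb_id => /eqP hx; rewrite fFE hx mulr0 mul0r.
Qed.

Definition Upred : pred F := fun u => (u ^+ q == u) && (u != 0).

Lemma Usq u : Upred u -> Upred (u ^+ 2).
Proof.
case/andP => /eqP hu u0; apply/andP; split; last exact: expf_neq0.
by rewrite exprAC hu.
Qed.

Definition Ug : fgraph := fg_sub (f := fun u : F => u ^+ 2) Usq.

Lemma pf1 x : (Tr x == 0) == false -> Tr (x / Tr x) == 1.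
Proof.
rewrite eqbF_neg => hx; rewrite mulrC TrM ?mulVf //.
by apply: FqV; apply: TrFq.
Qed.

Lemma pf2 x : (Tr x == 0) == false -> Upred (c * Tr x).
Proof.
rewrite eqbF_neg => hx; apply/andP; split; first by rewrite cTrFq.
exact: mulf_neq0.
Qed.

Lemma pf3 (u y : F) : Upred u -> Tr y == 1 -> (Tr (u / c * y) == 0) == false.
Proof.
case/andP => /eqP hu u0 /eqP hy; rewrite eqbF_neg TrM ?hy ?mulr1.
  by rewrite mulf_neq0 // invr_eq0.
by apply: FqM => //; apply: FqV.
Qed.

Definition Yt := {y : F | Tr y == 1}.

Lemma iso_G2 : fg_iso (fg_sub (labT false)) (fg_bigsum (fun _ : Yt => Ug)).
Proof.
apply: (@iso_intro (fg_sub (labT false)) (fg_bigsum (fun _ : Yt => Ug))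
  (fun x => existT (fun _ => fg_V Ug) (exist _ (val x / Tr (val x)) (pf1 (valP x)))
              (exist _ (c * Tr (val x)) (pf2 (valP x))))
  (fun v => exist _ (val (tagged v) / c * val (tag v)) (pf3 (valP (tagged v)) (valP (tag v))))).
- case=> x hx; apply: val_inj => /=.
  have hx' : Tr x != 0 by rewrite -eqbF_neg.
  by field; rewrite ?hx' ?c0.
- case=> [[y hy] [u hu]] /=.
  have hT : Tr (u / c * y) = u / c.
    case/andP: hu => /eqP hu _; rewrite TrM ?(eqP hy) ?mulr1 //.
    by apply: FqM => //; apply: FqV.
  case/andP: (hu) => _ u0.
  by apply: existT_const_eq; apply: val_inj => /=; rewrite hT; field; rewrite ?u0 ?c0.
case=> x hx /=.
have hx' : Tr x != 0 by rewrite -eqbF_neg.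
apply: existT_const_eq; apply: val_inj => /=; rewrite TrfF.
  by rewrite fFE; field; rewrite ?hx' ?c0.
by rewrite expr2; ring.
Qed.

Lemma card_Yt : #|{: Yt}| = q.
Proof.
rewrite card_sig; have [hk [_ [y0 hy0]]] := count_main.
rewrite -hk -(card_imset [pred x | Tr x == 0] (addIr y0)).
apply: eq_card => y; rewrite inE; apply/idP/imsetP.
  move=> /eqP hy; exists (y - y0); last by rewrite subrK.
  by rewrite inE TrB hy hy0 subrr.
by case=> x; rewrite inE => /eqP hx ->; rewrite TrD hx hy0 add0r.
Qed.

Lemma card_Upred : #|Upred| = q.-1.
Proof.
have [_ [hq _]] := count_main.
move: hq; rewrite (cardD1 0) inE expr0n eqn0Ngt q_pos eqxx add1n => E.
rewrite -E /=; apply: eq_card => u; rewrite !inE /Upred andbC.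
by [].
Qed.

Lemma card_U : #|fg_V Ug| = q.-1.
Proof. by rewrite /= card_sig -card_Upred. Qed.

Lemma qm1_pos : (0 < q.-1)%N.
Proof. by have := q_gt1; lia. Qed.

Lemma exists_w : exists w : F, (q.-1).-primitive_root w.
Proof.
have hall : all (q.-1).-unity_root (enum Upred).
  apply/allP => u; rewrite mem_enum => /andP [/eqP hu u0]; rewrite unity_rootE.
  by apply/eqP; apply: (mulIf u0); rewrite mul1r -exprSr prednK ?q_pos.
have hsz : (q.-1 <= size (enum Upred))%N by rewrite -cardE card_Upred.
have /hasP [w _ hw] := cyclic.has_prim_root qm1_pos hall (enum_uniq _) hsz.
by exists w.
Qed.

Section Prim.
Variable w : F.
Hypothesis hw : (q.-1).-primitive_root w.

Lemma w0 : w != 0.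
Proof.
apply/negP => /eqP E; have := prim_expr_order hw; rewrite E expr0n.
by rewrite eqn0Ngt qm1_pos /= => /eqP; rewrite eq_sym oner_eq0.
Qed.

Lemma wq : w ^+ q = w.
Proof. by rewrite -(prednK q_pos) exprS (prim_expr_order hw) mulr1. Qed.

Lemma pfw i : Upred (w ^+ i).
Proof. by apply/andP; split; [rewrite exprAC wq | apply: expf_neq0 w0]. Qed.

Definition Phi (pr : 'I_r * 'I_(2 ^ s)) : fg_V Ug :=
  exist _ (w ^+ (2 ^ s * pr.1 + r * pr.2)) (pfw _).

Lemma iso_U : fg_iso (fg_prod (DblG r) (DblG (2 ^ s))) Ug.
Proof.
exists Phi; split.
  apply: inj_card_bij.
    case=> e a [e' a'] /(f_equal val) /= /eqP.
    rewrite (eq_prim_root_expr hw) qr => E.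
    have cop : coprime (2 ^ s) r by apply: coprimeXl; rewrite coprime2n.
    have [h1 h2] := crt_inj cop (ltn_ord e) (ltn_ord e') (ltn_ord a) (ltn_ord a') E.
    by congr pair; apply: val_inj.
  by rewrite card_U card_prod !card_ord qr mulnC.
case=> e a; apply: val_inj => /=.
rewrite -exprM; apply/eqP; rewrite (eq_prim_root_expr hw) qr.
rewrite !muln_modr [(r * 2 ^ s)%N]mulnC modnDm.
apply/eqP; congr (_ %% _)%N; nia.
Qed.

End Prim.

Lemma main_sec : fg_iso (fgraph_of (fun x : F => c * (x ^+ q.+1 + x ^+ 2)))
    (fg_sum (Zstar q)
       (fg_bigsum (fun d : divisor_idx r =>
          let dd := val (val d) in
          fg_copies (q * totient dd %/ mult_order dd 2)%N
            (cyc_tree (mult_order dd 2) s)))).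
Proof.
change (fg_iso (fgraph_of fF) (fg_sum (Zstar q)
       (fg_bigsum (fun d : divisor_idx r =>
          let dd := val (val d) in
          fg_copies (q * totient dd %/ mult_order dd 2)%N
            (cyc_tree (mult_order dd 2) s))))).
have [w hw] := exists_w.
have [n [hn hiso]] := iso_odd r_odd.
have h1 : fg_iso (fgraph_of fF) (fg_sum (fg_sub (labT true)) (fg_sub (labT false))).
  apply: iso_trans (@iso_label F bool fF (fun x => Tr x == 0) labF) _.
  exact: iso_bigsum_bool.
apply: iso_trans h1 _; apply: iso_sum; first exact: iso_G1.
apply: iso_trans iso_G2 _.
apply: iso_trans (iso_copies_card Ug card_Yt) _.
have hU : fg_iso Ug (fg_bigsum (fun d : divisor_idx r =>
     fg_copies (n d) (cyc_tree (mult_order (val (val d)) 2) s))).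
  apply: iso_trans (iso_sym (iso_U hw)) _.
  apply: iso_trans (iso_prod hiso (iso_dbl_tree s)) _.
  apply: iso_trans (iso_prod_bigsum _ _) _.
  apply: iso_bigsum => d.
  apply: iso_trans (iso_prod_bigsum _ _) _.
  apply: iso_bigsum => i.
  exact: unroll.
apply: iso_trans (iso_bigsum (fun _ : 'I_q => hU)) _.
apply: iso_trans (iso_copies_bigsum _ _) _.
apply: iso_bigsum => d.
apply: iso_trans (iso_copies_copies _ _ _) _.
rewrite /= -hn mulnA mulnK //.
exact: iso_refl.
Qed.

End Field.


Unset Implicit Arguments. Set Strict Implicit.
Local Open Scope ring_scope.

Theorem theorem19 (p k : nat) (F : finFieldType) (q s r : nat) (c : F) :
  prime p -> odd p -> (0 < k)%N -> q = (p ^ k)%N ->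
  #|F| = (q ^ 2)%N ->
  odd r -> q.-1 = (2 ^ s * r)%N ->
  c != 0 -> c ^+ q = c ->
  fg_iso (fgraph_of (fun x : F => c * (x ^+ q.+1 + x ^+ 2)))
    (fg_sum (Zstar q)
       (fg_bigsum (fun d : divisor_idx r =>
          let dd := val (val d) in
          fg_copies (q * totient dd %/ mult_order dd 2)%N
            (cyc_tree (mult_order dd 2) s)))).
Proof.
move=> pp podd k0 qE cardF r_odd qr c0 cq.
exact: (main_sec pp podd k0 qE cardF r_odd qr c0 cq).
Qed.
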